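(* Let $(X,d)$ be a complete metric space and let $T\colon X\to X$ satisfy (CM): for all $x,y\in X$, $x\neq y$ implies $d(Tx,Ty)<\frac{1}{2}\{d(x,Tx)+d(y,Ty)\}$. Then the following are equivalent: (i) $\lim_{n\to\infty}d(T^nx,T^{n+1}x)=0$ for every $x\in X$; (ii) $T$ has a unique fixed point $z\in X$ and the sequence $(T^nx)_n$ converges to $z$ for every $x\in X$.
   Context: $T^n$ denotes the $n$-fold composition of $T$. *)

(* Defs.v *)
From Stdlib Require Import Reals.
Open Scope R_scope.

Definition is_metric {X : Type} (d : X -> X -> R) : Prop :=
  (forall x y, 0 <= d x y) /\
  (forall x y, d x y = 0 <-> x = y) /\
  (forall x y, d x y = d y x) /\
  (forall x y z, d x z <= d x y + d y z).

Definition seq_cv {X : Type} (d : X -> X -> R) (u : nat -> X) (l : X) : Prop :=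
  forall eps, 0 < eps -> exists N, forall n, (N <= n)%nat -> d (u n) l < eps.

Definition cauchy_seq {X : Type} (d : X -> X -> R) (u : nat -> X) : Prop :=
  forall eps, 0 < eps -> exists N, forall m n, (N <= m)%nat -> (N <= n)%nat ->
    d (u m) (u n) < eps.

Definition complete_metric {X : Type} (d : X -> X -> R) : Prop :=
  forall u : nat -> X, cauchy_seq d u -> exists l, seq_cv d u l.

Fixpoint iter_fun {X : Type} (n : nat) (T : X -> X) (x : X) : X :=
  match n with
  | O => x
  | S k => T (iter_fun k T x)
  end.

Definition CM {X : Type} (d : X -> X -> R) (T : X -> X) : Prop :=
  forall x y, x <> y -> d (T x) (T y) < (1/2) * (d x (T x) + d y (T y)).

(* Main.v *)
Require Import Defs.
From Stdlib Require Import Reals Lra Lia Classical.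
Open Scope R_scope.

Section S.
Variables (X : Type) (d : X -> X -> R) (T : X -> X).
Hypothesis hmet : is_metric d.
Hypothesis hCM : CM d T.

Lemma cm_le x y : d (T x) (T y) <= (1/2) * (d x (T x) + d y (T y)).
Proof.
  destruct hmet as [h0 [h1 [h2 h3]]].
  destruct (classic (x = y)) as [<-|H].
  - assert (d (T x) (T x) = 0) by (apply h1; auto).
    pose proof (h0 x (T x)). lra.
  - left; apply hCM; auto.
Qed.

Lemma dist_bound x m n :
  d (iter_fun m T x) (iter_fun n T x) <=
  3/2 * (d (iter_fun m T x) (iter_fun (S m) T x) + d (iter_fun n T x) (iter_fun (S n) T x)).
Proof.
  destruct hmet as [h0 [h1 [h2 h3]]].
  set (u := iter_fun m T x). set (v := iter_fun n T x).
  simpl. fold u v.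
  pose proof (cm_le u v).
  pose proof (h3 u (T u) v). pose proof (h3 (T u) (T v) v).
  rewrite (h2 (T v) v) in H1.
  pose proof (h0 u (T u)). pose proof (h0 v (T v)). lra.
Qed.

Lemma limit_fixed x :
  Un_cv (fun n => d (iter_fun n T x) (iter_fun (S n) T x)) 0 ->
  complete_metric d ->
  exists z, T z = z /\ seq_cv d (fun n => iter_fun n T x) z.
Proof.
  intros Hu hcomp.
  destruct hmet as [h0 [h1 [h2 h3]]].
  destruct (hcomp (fun n => iter_fun n T x)) as [z Hz].
  { intros eps He. destruct (Hu (eps/3)) as [N HN]; [lra|].
    exists N. intros m n Hm Hn.
    pose proof (HN m Hm). pose proof (HN n Hn). unfold R_dist in *.
    rewrite Rminus_0_r in *.
    pose proof (dist_bound x m n).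
    pose proof (h0 (iter_fun m T x) (iter_fun (S m) T x)).
    pose proof (h0 (iter_fun n T x) (iter_fun (S n) T x)).
    rewrite Rabs_right in H by lra. rewrite Rabs_right in H0 by lra. lra. }
  exists z. split; [|exact Hz].
  apply h1. destruct (Rle_lt_dec (d z (T z)) 0) as [Hle|Hlt].
  { pose proof (h0 z (T z)). rewrite h2. lra. }
  exfalso. set (e := d z (T z)) in *.
  destruct (Hu (e/4)) as [N1 HN1]; [lra|].
  destruct (Hz (e/4)) as [N2 HN2]; [lra|].
  set (n := (N1 + N2)%nat).
  assert (A := HN1 n ltac:(unfold n; lia)).
  assert (B := HN2 (S n) ltac:(unfold n; lia)).
  unfold R_dist in A. rewrite Rminus_0_r in A.
  rewrite Rabs_right in A by apply Rle_ge, h0.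
  simpl in A, B.
  pose proof (cm_le (iter_fun n T x) z).
  pose proof (h3 z (T (iter_fun n T x)) (T z)).
  pose proof (h2 z (T (iter_fun n T x))). fold e in H, H0. lra.
Qed.
End S.

Theorem theorem5p2 (X : Type) (d : X -> X -> R) (T : X -> X)
  (hne : inhabited X) (hmet : is_metric d) (hcomp : complete_metric d) (hCM : CM d T) :
  (forall x : X, Un_cv (fun n => d (iter_fun n T x) (iter_fun (S n) T x)) 0)
  <->
  (exists z : X, T z = z /\ (forall w : X, T w = w -> w = z) /\
     (forall x : X, seq_cv d (fun n => iter_fun n T x) z)).
Proof.
  pose proof hmet as [h0 [h1 [h2 h3]]].
  assert (uniq : forall z w, T z = z -> T w = w -> w = z).
  { intros z w Hz Hw. destruct (classic (w = z)) as [|H]; auto.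
    exfalso. pose proof (hCM w z H). rewrite Hz, Hw in H0.
    assert (d w w = 0) by (apply h1; auto). assert (d z z = 0) by (apply h1; auto).
    pose proof (h0 w z). lra. }
  split.
  - intros Hi. destruct hne as [x0].
    destruct (limit_fixed X d T hmet hCM x0 (Hi x0) hcomp) as [z [Hz _]].
    exists z. split; [exact Hz|]. split.
    + intros w Hw. apply uniq; auto.
    + intros x. destruct (limit_fixed X d T hmet hCM x (Hi x) hcomp) as [z' [Hz' Hc]].
      rewrite (uniq z' z Hz' Hz). exact Hc.
  - intros [z [Hz [_ Hc]]] x eps He.
    destruct (Hc x (eps/2)) as [N HN]; [lra|]. exists N. intros n Hn.
    unfold R_dist. rewrite Rminus_0_r.
    pose proof (HN n Hn). pose proof (HN (S n) ltac:(lia)). simpl in H0.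
    pose proof (h3 (iter_fun n T x) z (T (iter_fun n T x))).
    pose proof (h2 z (T (iter_fun n T x))). simpl.
    rewrite Rabs_right by apply Rle_ge, h0. lra.
Qed.
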